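(* Let $G$ and $G_0$ be cacti-graphs with $G_0$ a subgraph of $G$. Then either $G=G_0$ or there exist sequences $(P_1,\dots,P_r)$ and $(G_0,G_1,\dots,G_r)$ of subgraphs of $G$ such that $G_r=G$, every $G_i$ is a cacti-graph, and for every $i\in\{1,\dots,r\}$: $G_i=G_{i-1}\cup P_i$ with $E(P_i)\cap E(G_{i-1})=\emptyset$, where $P_i$ is a path, a cycle, a lollipop, or a bicycle, and (p) if $P_i$ is a path then $V(G_{i-1})\cap V(P_i)=End(P_i)$; (l) if $P_i$ is a lollipop then $V(G_{i-1})\cap V(P_i)=End(P_i)$; (c) if $P_i$ is a cycle then $|V(G_{i-1})\cap V(P_i)|=1$; (b) if $P_i$ is a bicycle then $V(G_{i-1})\cap V(P_i)=\emptyset$. Consequently $G_{i-1}$ is a proper subgraph of $G_i$ and $\Delta G_i-\Delta G_{i-1}=1$ for all $i$.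
   Context: Graphs are finite, may have loops and parallel edges, and have no isolated vertices unless stated otherwise. A leaf is a vertex incident to exactly one edge, which is not a loop. $\Delta G=|E(G)|-|V(G)|$. A cycle is a connected graph all of whose vertices have degree 2 (a loop contributes 2; a single vertex with a loop is a cycle). An $(x,y)$-path is a path with distinct end vertices $x,y$ and at least one edge, and $End(P)=\{x,y\}$. A lollipop is a graph obtained from a cycle $C$ (possibly a loop) and a vertex-disjoint path $P$ with end vertices $y,x$ by identifying a vertex of $C$ with $y$; $End(Q)=\{x\}$. A bicycle is a connected graph with no leaves and $\Delta=1$. A cacti-graph is a graph with no isolated vertices, no leaves, and no component that is a cycle (equivalently, no isolated vertices, no leaves, and every component contains at least two cycles). *)

(* Defs.v *)
(* Multigraphs (loops and parallel edges allowed) inside an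
   ambient incidence structure: vertex type V, edge type E, and
   ends : E -> V * V giving the two (unordered) end vertices of each edge
   (a loop e has (ends e).1 = (ends e).2). *)
From HB Require Import structures.
From mathcomp Require Import all_boot all_order all_algebra.
Set Implicit Arguments. Unset Strict Implicit. Unset Printing Implicit Defensive.

Record mgraph (V E : finType) := MGraph { gV : {set V}; gE : {set E} }.

Section MultiGraphs.
Variables (V E : finType) (ends : E -> V * V).
Implicit Types (G H : mgraph V E).

Definition wf G := forall e, e \in gE G -> ((ends e).1 \in gV G) && ((ends e).2 \in gV G).

Definition subgraph H G := (gV H \subset gV G) && (gE H \subset gE G).
Definition proper_subgraph H G := subgraph H G /\ H <> G.

Definition gunion G H := MGraph (gV G :|: gV H) (gE G :|: gE H).

Definition Delta G : int := (#|gE G|%:Z - #|gV G|%:Z)%R.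

Definition incident G v := [set e in gE G | ((ends e).1 == v) || ((ends e).2 == v)].
(* degree; a loop contributes 2 *)
Definition deg G v := #|[set e in gE G | (ends e).1 == v]| + #|[set e in gE G | (ends e).2 == v]|.

Definition isolated G v := (v \in gV G) && (incident G v == set0).
Definition is_leaf G v := (v \in gV G) /\
  exists e, incident G v = [set e] /\ (ends e).1 != (ends e).2.

Definition no_isolated G := forall v, ~~ isolated G v.
Definition no_leaves G := forall v, ~ is_leaf G v.

Definition adj G : rel V := fun x y =>
  [exists e in gE G, (ends e == (x, y)) || (ends e == (y, x))].

Definition connected G := gV G != set0 /\
  forall x y, x \in gV G -> y \in gV G -> connect (adj G) x y.

Definition is_cycle G := connected G /\ forall v, v \in gV G -> deg G v = 2.

Definition is_path_xy G (x y : V) := exists (vs : seq V) (es : seq E),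
  [/\ size vs = (size es).+1, 0 < size es, uniq vs && uniq es,
      (forall (i : nat) (e0 : E), i < size es ->
        (ends (nth e0 es i) == (nth x vs i, nth x vs i.+1)) ||
        (ends (nth e0 es i) == (nth x vs i.+1, nth x vs i))) &
      [/\ head x vs = x, last x vs = y,
          gV G = [set v in vs] & gE G = [set e in es]]].

Definition is_path G := exists x y, is_path_xy G x y.

(* a lollipop with End = {x}: a cycle C and a path Q with ends y, x, glued
   by identifying y with a vertex of C *)
Definition is_lollipop_x G (x : V) := exists (C Q : mgraph V E) (y : V),
  [/\ is_cycle C, is_path_xy Q y x, gV C :&: gV Q = [set y],
      gE C :&: gE Q = set0 & G = gunion C Q].

Definition is_lollipop G := exists x, is_lollipop_x G x.

Definition is_bicycle G := [/\ connected G, no_leaves G & Delta G = 1%R].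

Definition component G v :=
  MGraph [set u in gV G | connect (adj G) v u]
         [set e in gE G | connect (adj G) v (ends e).1].

Definition cacti G := [/\ no_isolated G, no_leaves G &
  forall v, v \in gV G -> ~ is_cycle (component G v)].

End MultiGraphs.

(* Main.v *)
Require Import Defs.
From mathcomp Require Import all_boot all_order all_algebra.
From mathcomp Require Import zify.
Set Implicit Arguments. Unset Strict Implicit. Unset Printing Implicit Defensive.

Section Walks.
Variables (V E : finType) (ends : E -> V * V).
Implicit Types (G H X : mgraph V E).

Definition inc (v : V) (e : E) := ((ends e).1 == v) || ((ends e).2 == v).
Definition lk (a b : V) (e : E) := (ends e == (a, b)) || (ends e == (b, a)).

Fixpoint walk (a : V) (p : seq (E * V)) : bool :=
  if p is s :: p' then lk a s.2 s.1 && walk s.2 p' else true.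

Definition gw (a : V) (p : seq (E * V)) : mgraph V E := MGraph [set v in a :: map snd p] [set e in map fst p].

Lemma walk_cat a p1 p2 :
  walk a (p1 ++ p2) = walk a p1 && walk (last a (map snd p1)) p2.
Proof. by elim: p1 a => [|s p1 IH] a //=; rewrite IH andbA. Qed.

Lemma walk_rcons a p s :
  walk a (rcons p s) = walk a p && lk (last a (map snd p)) s.2 s.1.
Proof. by rewrite -cats1 walk_cat /= andbT. Qed.

Lemma lk_inc a b e : lk a b e -> inc a e && inc b e.
Proof.
by rewrite /lk /inc; case/orP=> /eqP ->; rewrite /= !eqxx ?orbT.
Qed.

Lemma lk_sym a b e : lk a b e = lk b a e.
Proof. by rewrite /lk orbC. Qed.

Lemma walk_ends a p f x : walk a p -> f \in map fst p -> inc x f ->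
  x \in a :: map snd p.
Proof.
elim: p a => [|s p IH] a //= /andP[hl hw].
rewrite inE => /orP[/eqP ->|hf] hx.
  move: hl; rewrite /lk /inc in hx *.
  case/orP=> /eqP he; rewrite he /= in hx;
  by case/orP: hx => /eqP <-; rewrite !inE eqxx ?orbT.
by rewrite inE (IH _ hw hf hx) orbT.
Qed.

Lemma walk_cover a p x : p != [::] -> x \in a :: map snd p ->
  exists2 f, f \in map fst p & inc x f.
Proof.
case: p => [|s p] // _; rewrite inE => /orP[/eqP ->|].
Abort.

Lemma adj_sym G : symmetric (adj ends G).
Proof.
move=> x y; apply/existsP/existsP => -[e /andP[he h]]; exists e;
by rewrite he /= orbC.
Qed.

Lemma walk_connect G a p : walk a p -> {subset map fst p <= gE G} ->
  forall v, v \in a :: map snd p -> connect (adj ends G) a v.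
Proof.
elim: p a => [|s p IH] a /=.
  by move=> _ _ v; rewrite inE => /eqP ->.
case/andP=> hl hw hs v; rewrite inE => /orP[/eqP ->//|hv].
have h1 : adj ends G a s.2.
  apply/existsP; exists s.1; rewrite hs ?inE ?eqxx //.
apply: connect_trans (connect1 h1) _.
apply: IH => // f hf; apply: hs; by rewrite inE hf orbT.
Qed.

Lemma walk_nth a p x0 e0 i : walk a p -> i < size p ->
  lk (nth x0 (a :: map snd p) i) (nth x0 (map snd p) i) (nth e0 (map fst p) i).
Proof.
elim: p a i => [|s p IH] a i //= /andP[hl hw].
by case: i => [|i] //= hi; apply: IH.
Qed.

Lemma card_set_uniq (T : finType) (s : seq T) (P : pred T) :
  uniq s -> #|[set x | (x \in s) && P x]| = count P s.
Proof.
move=> hu.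
have -> : [set x | (x \in s) && P x] = [set x in filter P s].
  by apply/setP => x; rewrite !inE mem_filter andbC.
rewrite -size_filter -(card_uniqP (filter_uniq P hu)).
by apply: eq_card => x; rewrite inE.
Qed.

Lemma card_set_uniq1 (T : finType) (s : seq T) :
  uniq s -> #|[set x in s]| = size s.
Proof.
move=> hu; rewrite -(count_predT s) -(card_set_uniq predT hu).
by apply: eq_card => x; rewrite !inE andbT.
Qed.


Definition dA G v := [set e in gE G | (ends e).1 == v].
Definition dB G v := [set e in gE G | (ends e).2 == v].

Lemma degE G v : deg ends G v = #|dA G v| + #|dB G v|.
Proof. by []. Qed.

Lemma incidentE G v : incident ends G v = dA G v :|: dB G v.
Proof. by apply/setP => e; rewrite !inE andb_orr. Qed.

Lemma deg_ge_inc G v : #|incident ends G v| <= deg ends G v.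
Proof. rewrite incidentE degE; exact: leq_card_setU. Qed.

Lemma deg_two G v e1 e2 : e1 \in gE G -> e2 \in gE G -> e1 != e2 ->
  inc v e1 -> inc v e2 -> 2 <= deg ends G v.
Proof.
move=> h1 h2 hne i1 i2; apply: leq_trans (deg_ge_inc G v).
have sub : [set e1; e2] \subset incident ends G v.
  by apply/subsetP => e; rewrite !inE => /orP[]/eqP->; rewrite ?h1 ?h2.
by apply: leq_trans (subset_leq_card sub); rewrite cards2 hne.
Qed.

Lemma deg_loop G v e : e \in gE G -> ends e = (v, v) -> 2 <= deg ends G v.
Proof.
move=> he hl; rewrite degE.
have a : 0 < #|dA G v| by apply/card_gt0P; exists e; rewrite !inE he hl eqxx.
have b : 0 < #|dB G v| by apply/card_gt0P; exists e; rewrite !inE he hl eqxx.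
by rewrite -(addn1 1) leq_add.
Qed.

Lemma dAB0 G v : (forall e, e \in dA G v -> e \in dB G v -> False) ->
  deg ends G v = #|incident ends G v|.
Proof.
move=> h; rewrite degE incidentE -cardsUI.
suff -> : dA G v :&: dB G v = set0 by rewrite cards0 addn0.
apply/setP => e; rewrite in_set0 in_setI; apply/negbTE; apply/negP => /andP[a b].
exact: (h e a b).
Qed.

Lemma deg2_ok G v : 2 <= deg ends G v -> ~ is_leaf ends G v /\ ~~ isolated ends G v.
Proof.
move=> hd; split.
  case=> _ [e [hi hne]].
  move: hd; rewrite dAB0 ?hi ?cards1 //.
  move=> x; rewrite !inE => /andP[hx /eqP h1] /andP[_ /eqP h2].
  have : x \in incident ends G v by rewrite !inE hx h1 eqxx.
  by rewrite hi inE => /eqP hxe; subst x; rewrite h1 h2 eqxx in hne.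
apply/negP => /andP[_ /eqP hi].
move: hd; rewrite degE.
have -> : dA G v = set0.
  apply/setP => e; rewrite in_set0; apply/negbTE/negP => he.
  have : e \in incident ends G v by rewrite incidentE inE he.
  by rewrite hi inE.
have -> : dB G v = set0.
  apply/setP => e; rewrite in_set0; apply/negbTE/negP => he.
  have : e \in incident ends G v by rewrite incidentE inE he orbT.
  by rewrite hi inE.
by rewrite cards0.
Qed.

Lemma ok_deg2 G v : v \in gV G -> ~ is_leaf ends G v -> ~~ isolated ends G v ->
  2 <= deg ends G v.
Proof.
move=> hv hl hi; rewrite leqNgt; apply/negP => hd.
have hle : #|incident ends G v| <= 1 by apply: leq_trans (deg_ge_inc G v) _.
case e0 : #|incident ends G v| hle => [|[|]] // _.
  by move: hi; rewrite /isolated hv -cards_eq0 e0.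
have /cards1P [e he] : #|incident ends G v| == 1 by rewrite e0.
apply: hl; split => //; exists e; split => //.
apply/negP => /eqP hloop.
have : e \in incident ends G v by rewrite he inE.
rewrite inE => /andP[hE hev].
have : 2 <= deg ends G v.
  apply: (@deg_loop G v e hE).
  case: (ends e) hloop hev => a b /= -> ; rewrite /= orbb => /eqP ->. by [].
by rewrite leqNgt hd.
Qed.

Lemma deg_sub G H v : gE H \subset gE G -> deg ends H v <= deg ends G v.
Proof.
move=> s; rewrite !degE; apply: leq_add; apply: subset_leq_card;
apply/subsetP => e; rewrite !inE => /andP[he ->]; by rewrite (subsetP s _ he).
Qed.

Lemma deg_sub_strict G H v f : gE H \subset gE G -> f \in gE G -> f \notin gE H ->
  inc v f -> deg ends H v < deg ends G v.
Proof.
move=> s hf hnf; rewrite /inc !degE => /orP[] hv.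
  rewrite -addSn; apply: leq_add; last first.
    apply: subset_leq_card; apply/subsetP => e; rewrite !inE => /andP[he ->];
    by rewrite (subsetP s _ he).
  apply: proper_card; apply/properP; split.
    by apply/subsetP => e; rewrite !inE => /andP[he ->]; rewrite (subsetP s _ he).
  by exists f; rewrite !inE ?hf ?hv ?(negbTE hnf).
rewrite -addnS; apply: leq_add.
  apply: subset_leq_card; apply/subsetP => e; rewrite !inE => /andP[he ->];
  by rewrite (subsetP s _ he).
apply: proper_card; apply/properP; split.
  by apply/subsetP => e; rewrite !inE => /andP[he ->]; rewrite (subsetP s _ he).
by exists f; rewrite !inE ?hf ?hv ?(negbTE hnf).
Qed.


Lemma adj_sub G H x y : gE H \subset gE G -> adj ends H x y -> adj ends G x y.
Proof.
move=> s /existsP[e /andP[he h]]; apply/existsP; exists e; by rewrite (subsetP s _ he).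
Qed.

Lemma connect_mono G H x y : gE H \subset gE G ->
  connect (adj ends H) x y -> connect (adj ends G) x y.
Proof.
move=> s; apply: connect_sub => a b h; apply: connect1; exact: adj_sub h.
Qed.

Lemma adj_lk G x y : adj ends G x y -> exists2 e, e \in gE G & lk x y e.
Proof. by case/existsP => e /andP[he h]; exists e. Qed.

Lemma comp_deg G v x : connect (adj ends G) v x ->
  deg ends (component ends G v) x = deg ends G x.
Proof.
move=> hvx; rewrite !degE; congr (_ + _); apply: eq_card => e; rewrite !inE /=.
  case: eqP => [h1|]; last by rewrite !andbF.
  by rewrite h1 hvx !andbT.
case: eqP => [h2|]; last by rewrite !andbF.
case he : (e \in gE G) => //=; rewrite !andbT.
apply: connect_trans hvx _.
rewrite (sym_connect_sym (@adj_sym _)) .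
apply: connect1; apply/existsP; exists e; rewrite he /=.
by rewrite -h2 -surjective_pairing eqxx.
Qed.

Lemma adj_comp G v y z : connect (adj ends G) v y -> adj ends G y z ->
  adj ends (component ends G v) y z.
Proof.
move=> hvy /existsP[e /andP[he h]]; apply/existsP; exists e; rewrite h andbT inE he /=.
have hvz : connect (adj ends G) v z.
  apply: connect_trans hvy (connect1 _); apply/existsP; exists e; by rewrite he h.
by case/orP: h => /eqP ->.
Qed.

Lemma connect_comp G v y x : connect (adj ends G) v y -> connect (adj ends G) y x ->
  connect (adj ends (component ends G v)) y x.
Proof.
move=> hvy /connectP[s hp ->]; elim: s y hvy hp => [|z s IH] y hvy //= /andP[h hp].
apply: connect_trans (connect1 (adj_comp hvy h)) _.
apply: IH hp; exact: connect_trans hvy (connect1 h).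
Qed.

Lemma comp_connected G v : v \in gV G -> connected ends (component ends G v).
Proof.
move=> hv; split.
  by apply/set0Pn; exists v; rewrite inE hv connect0.
move=> x y; rewrite !inE => /andP[_ hx] /andP[_ hy].
apply: (connect_trans (y:=v)).
  rewrite (sym_connect_sym (@adj_sym _)) .
  exact: connect_comp (connect0 _ _) hx.
exact: connect_comp (connect0 _ _) hy.
Qed.

Lemma cacti_union H G1 : subgraph H G1 -> cacti ends H ->
  (forall v, v \in gV G1 -> 2 <= deg ends G1 v) ->
  (forall v, v \in gV G1 -> exists w, connect (adj ends G1) v w /\
      ((w \in gV H) || ((w \in gV G1) && (3 <= deg ends G1 w)))) ->
  cacti ends G1.
Proof.
case/andP=> sV sE [hHi hHl hHc] hdeg hcon; split.
- move=> v; case hv: (v \in gV G1); last by rewrite /isolated hv.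
  by case: (deg2_ok (hdeg v hv)).
- move=> v hl; have hv := hl.1; by case: (deg2_ok (hdeg v hv)).
move=> v hv [hc hcd].
case: (hcon v hv) => w [hvw /orP[hw|/andP[hw hd]]]; last first.
  have : w \in gV (component ends G1 v) by rewrite inE hw hvw.
  by move/hcd; rewrite comp_deg // => h; rewrite h in hd.
apply: (hHc w hw); split; first exact: comp_connected.
move=> x; rewrite inE => /andP[hxH hwx]; rewrite comp_deg //.
have h2 := ok_deg2 hxH (hHl x) (hHi x).
have hvx : connect (adj ends G1) v x.
  apply: connect_trans hvw _; exact: connect_mono sE hwx.
have hxG : x \in gV G1 by rewrite (subsetP sV).
have := hcd x; rewrite inE hxG hvx comp_deg // => /(_ isT) h3.
apply/eqP; rewrite eqn_leq h2 andbT -h3; exact: deg_sub.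
Qed.


Definition okE G (F : {set E}) (f : E) := (f \in gE G) && (f \notin F).

Lemma other_end v f : inc v f ->
  lk v (if (ends f).1 == v then (ends f).2 else (ends f).1) f.
Proof.
rewrite /inc /lk; case: eqP => [h1|h1] /= h.
  by rewrite -h1 -surjective_pairing eqxx.
by rewrite -(eqP h) -surjective_pairing eqxx orbT.
Qed.

Lemma inc_wf G v f : wf ends G -> f \in gE G -> inc v f -> v \in gV G.
Proof.
move=> hw hf; have /andP[a b] := hw f hf.
by rewrite /inc => /orP[]/eqP <-.
Qed.

Lemma walk_exists G (S : {set V}) (F : {set E}) u e :
  wf ends G -> no_leaves ends G ->
  (forall f v, okE G F f -> inc v f -> v \notin S ->
      forall f', f' \in gE G -> inc v f' -> f' \notin F) ->
  u \in S -> okE G F e -> inc u e ->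
  exists q e' z, [/\ walk u (rcons q (e', z)), uniq (map fst (rcons q (e', z))),
       all (okE G F) (map fst (rcons q (e',z))),
       uniq (map snd q) && all (fun v => v \notin S) (map snd q) &
       (z \in S) || (z \in map snd q)].
Proof.
move=> hwf hnl hF hu he hue.
pose opn q := [&& walk u q, uniq (map fst q), all (okE G F) (map fst q),
   uniq (map snd q), all (fun v => v \notin S) (map snd q) & q != [::]].
suff aux : forall n q, opn q -> #|V| < size q + n ->
  exists q e' z, [/\ walk u (rcons q (e', z)), uniq (map fst (rcons q (e', z))),
       all (okE G F) (map fst (rcons q (e',z))),
       uniq (map snd q) && all (fun v => v \notin S) (map snd q) &
       (z \in S) || (z \in map snd q)].
  set w := if (ends e).1 == u then (ends e).2 else (ends e).1.
  have hl := other_end hue; rewrite -/w in hl.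
  case hw : (w \in S).
    exists [::], e, w; split => //=; by rewrite ?hl ?he ?hw.
  apply: (aux #|V|.+1 [:: (e, w)]); last by rewrite /= add1n ltnS.
  by rewrite /opn /= hl he hw.
elim=> [|n IH] q.
  case/and5P=> _ _ _ hu2 _; rewrite addn0.
  rewrite -(size_map snd) -(card_uniqP hu2).
  by rewrite ltnNge max_card.
case/lastP: q => [|q0 [g v]]; first by case/and5P => _ _ _ _ /andP[_].
rewrite /opn !map_rcons walk_rcons rcons_uniq all_rcons rcons_uniq all_rcons /=.
case/and5P=> /andP[hw0 hlk] /andP[hg hu0] /andP[hokg hall0] /andP[hv hu1] /andP[/andP[hvS hall1] _].
rewrite size_rcons => hsz.
set a := last u (map snd q0) in hlk.
have hav : a != v.
  apply/eqP => hav; have := mem_last u (map snd q0); rewrite -/a hav inE.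
  case/orP => [/eqP hvu|]; last by rewrite (negbTE hv).
  by rewrite hvu hu in hvS.
have /andP[_ hincv] := lk_inc hlk.
have hgG : g \in gE G by case/andP: hokg.
have hvG : v \in gV G by apply: inc_wf hincv.
have [g' hg'] : exists g', [&& g' \in gE G, inc v g' & g' != g].
  case: (boolP [exists g', [&& g' \in gE G, inc v g' & g' != g]]) => [/existsP //|hno].
  exfalso; apply: (hnl v); split => //; exists g; split.
    apply/setP => f; rewrite !inE; apply/idP/idP.
      case/andP=> hf hif; case: (eqVneq f g) => // hfg; exfalso.
      by apply: (negP hno); apply/existsP; exists f; rewrite hf /inc hif hfg.
    by move/eqP ->; rewrite hgG.
  apply/negP => /eqP hloop; move: hlk; rewrite /lk => /orP[]/eqP he2;
  by rewrite he2 /= in hloop; rewrite hloop eqxx in hav.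
case/and3P: hg' => hg'G hinc' hg'g.
have hg'F : g' \notin F by apply: (hF g v hokg hincv hvS).
have hg'q : g' \notin rcons (map fst q0) g.
  rewrite mem_rcons inE (negbTE hg'g) /=; apply/negP => hin.
  have := walk_ends hw0 hin hinc'; rewrite inE => /orP[/eqP hvu|]; last by rewrite (negbTE hv).
  by rewrite hvu hu in hvS.
set z := if (ends g').1 == v then (ends g').2 else (ends g').1.
have hlz := other_end hinc'; rewrite -/z in hlz.
case hz : ((z \in S) || (z \in rcons (map snd q0) v)).
  exists (rcons q0 (g, v)), g', z; rewrite !map_rcons !walk_rcons !rcons_uniq !all_rcons /=.
  rewrite hw0 hlk map_rcons !last_rcons /= hlz hg'q hg hu0 hokg hall0 hv hu1 hvS hall1.
  by rewrite /okE hg'G hg'F hz.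
apply: (IH (rcons (rcons q0 (g, v)) (g', z))); last first.
  by rewrite !size_rcons addSnnS.
rewrite /opn !map_rcons !walk_rcons !rcons_uniq !all_rcons /= !map_rcons !last_rcons /=.
move/negbT: hz; rewrite negb_or => /andP[hzS hzq].
rewrite hw0 hlk hlz hg'q hg hu0 hokg hall0 hzq hv hu1 hzS hvS hall1 /okE hg'G hg'F /=.
by case: (q0).
Qed.


Lemma gw_wf a p : walk a p -> wf ends (gw a p).
Proof.
move=> hw f hf; rewrite inE /= in hf.
have h1 : inc (ends f).1 f by rewrite /inc eqxx.
have h2 : inc (ends f).2 f by rewrite /inc eqxx orbT.
by apply/andP; split; rewrite inE; [exact: walk_ends hw hf h1 | exact: walk_ends hw hf h2].
Qed.

Lemma gw_connect a p : walk a p -> forall v, v \in gV (gw a p) ->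
  connect (adj ends (gw a p)) a v.
Proof.
move=> hw v; rewrite inE; apply: walk_connect hw _ v => f hf; by rewrite inE.
Qed.



Lemma gw_cover a p v : p != [::] -> walk a p -> v \in gV (gw a p) ->
  exists2 f, f \in gE (gw a p) & inc v f.
Proof.
move=> hp hw; rewrite inE /=.
have key : forall t, t \in p -> inc t.2 t.1.
  elim: p a hw {hp} => [|s p IH] a //= /andP[hl hw] t; rewrite inE => /orP[/eqP ->|ht].
    by case/andP: (lk_inc hl).
  exact: IH hw t ht.
rewrite inE => /orP[/eqP ->|].
  case: p hp hw key => [|s p] // _ /andP[hl _] _.
  by exists s.1; rewrite ?inE ?eqxx //; case/andP: (lk_inc hl).
case/mapP => t ht ->; exists t.1; last exact: key.
by rewrite inE; apply/mapP; exists t.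
Qed.

Section Attach.
Variables (X : mgraph V E) (u : V) (q : seq (E * V)) (e' : E) (z : V).
Let p := rcons q (e', z).
Hypotheses (hu : u \in gV X) (hw : walk u p) (hue : uniq (map fst p))
  (hE : all (fun f => f \notin gE X) (map fst p))
  (hq : uniq (map snd q) && all (fun v => v \notin gV X) (map snd q))
  (hz : (z \in gV X) || (z \in map snd q)).

Lemma attach_cap x : (x \in gV X :&: gV (gw u p)) = (x == u) || ((x == z) && (z \in gV X)).
Proof.
case/andP: hq => _ /allP hall.
rewrite !inE /p map_rcons mem_rcons !inE.
case: (eqVneq x u) => [->|hxu]; first by rewrite hu.
case: (eqVneq x z) => [->|hxz] /=; first by rewrite andbT; case: (z \in gV X).
case hx: (x \in map snd q); rewrite ?andbF // andbT.
by rewrite (negbTE (hall x hx)).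
Qed.

Lemma attach_cardE : #|gE (gunion X (gw u p))| = #|gE X| + size p.
Proof.
rewrite /= cardsU.
have -> : gE X :&: [set e in map fst p] = set0.
  apply/setP => f; rewrite !inE; apply/negbTE/negP => /andP[h1 h2].
  by have := allP hE f h2; rewrite h1.
by rewrite cards0 subn0 card_set_uniq1 // size_map.
Qed.

Lemma attach_cardV : #|gV (gunion X (gw u p))| = #|gV X| + size q.
Proof.
case/andP: hq => hqu /allP hall.
have -> : gV (gunion X (gw u p)) = gV X :|: [set v in map snd q].
  apply/setP => x; rewrite !inE /p map_rcons mem_rcons !inE.
  case: (eqVneq x u) => [->|_]; first by rewrite hu.
  case: (eqVneq x z) => [->|_] /=; last by [].
  by case/orP: hz => ->; rewrite ?orbT.
rewrite cardsU.
have -> : gV X :&: [set v in map snd q] = set0.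
  apply/setP => x; rewrite !inE; apply/negbTE/negP => /andP[h1 h2].
  by have := hall x h2; rewrite h1.
by rewrite cards0 subn0 card_set_uniq1 // size_map.
Qed.

Lemma attach_delta : Delta (gunion X (gw u p)) = (Delta X + 1)%R.
Proof.
rewrite /Delta attach_cardE attach_cardV /p size_rcons.
move: #|gE X| #|gV X| (size q) => a b c.
rewrite !PoszD; lia.
Qed.

Lemma attach_deg v : v \in map snd q -> 2 <= deg ends (gw u p) v.
Proof.
move: hw hue; rewrite /p => hw' hue'.
case/mapP => s1 hs1 ->.
case/splitPr: hs1 hw' hue' => q1 q2.
rewrite rcons_cat rcons_cons walk_cat /= map_cat /= cat_uniq /=.
case/and3P=> _ hl1 hw2 /and4P[_ _ hn _].
have hs1 : inc s1.2 s1.1 by case/andP: (lk_inc hl1).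
case: q2 hw2 hn => [|s2 q2] /= /andP[hl2 _] hn.
  have hne : s1.1 != e' by apply: contra hn => /eqP ->; rewrite inE eqxx.
  apply: (deg_two _ _ hne hs1); rewrite ?inE ?map_cat ?mem_cat /= ?inE ?eqxx ?orbT //.
  by case/andP: (lk_inc hl2).
have hne : s1.1 != s2.1 by apply: contra hn => /eqP ->; rewrite inE eqxx.
apply: (deg_two _ _ hne hs1); rewrite ?inE ?map_cat ?mem_cat /= ?inE ?eqxx ?orbT //.
by case/andP: (lk_inc hl2).
Qed.

End Attach.


Lemma walk_count a p v : walk a p ->
  count (fun s : E * V => (ends s.1).1 == v) p + count (fun s : E * V => (ends s.1).2 == v) p
  = count (pred1 v) (belast a (map snd p)) + count (pred1 v) (map snd p).
Proof.
elim: p a => [|s p IH] a //= /andP[hl hw].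
have k : ((ends s.1).1 == v) + ((ends s.1).2 == v) = (a == v) + (s.2 == v) :> nat.
  by case/orP: hl => /eqP ->; rewrite //= addnC.
by rewrite [LHS]addnACA k (IH _ hw) addnACA.
Qed.

Lemma closed_cycle c p : walk c p -> p != [::] -> last c (map snd p) = c ->
  uniq (map fst p) -> uniq (map snd p) -> is_cycle ends (gw c p).
Proof.
move=> hw hp hl hue huv.
have hc : c \in map snd p.
  case: p hp hl {hw hue huv} => [|s p] //= _ hl.
  by have := mem_last s.2 (map snd p); rewrite hl.
have hV : forall v, v \in gV (gw c p) -> v \in map snd p.
  by move=> v; rewrite !inE => /orP[/eqP ->|].
split.
  split; first by apply/set0Pn; exists c; rewrite !inE eqxx.
  move=> x y hx hy.
  apply: (connect_trans (y:=c)); last exact: gw_connect.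
  rewrite (sym_connect_sym (@adj_sym _)); exact: gw_connect.
move=> v /hV hv.
rewrite degE /dA /dB /=.
have e1 : #|[set e in [set e0 in map fst p] | (ends e).1 == v]| =
          count (fun s : E * V => (ends s.1).1 == v) p.
  have -> : count (fun s : E * V => (ends s.1).1 == v) p =
            count (fun e => (ends e).1 == v) (map fst p) by rewrite count_map.
  rewrite -(card_set_uniq (fun e => (ends e).1 == v) hue).
  by apply: eq_card => e; rewrite !inE.
have e2 : #|[set e in [set e0 in map fst p] | (ends e).2 == v]| =
          count (fun s : E * V => (ends s.1).2 == v) p.
  have -> : count (fun s : E * V => (ends s.1).2 == v) p =
            count (fun e => (ends e).2 == v) (map fst p) by rewrite count_map.
  rewrite -(card_set_uniq (fun e => (ends e).2 == v) hue).
  by apply: eq_card => e; rewrite !inE.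
rewrite e1 e2 (walk_count v hw).
have hb : count (pred1 v) (belast c (map snd p)) = count (pred1 v) (map snd p).
  have := congr1 (count (pred1 v)) (lastI c (map snd p)).
  by rewrite hl -cats1 count_cat /= addn0 addnC => /addIn ->.
by rewrite hb (count_uniq_mem v huv) hv.
Qed.

Lemma walk_path a p : walk a p -> p != [::] -> uniq (a :: map snd p) ->
  uniq (map fst p) -> is_path_xy ends (gw a p) a (last a (map snd p)).
Proof.
move=> hw hp huv hue; exists (a :: map snd p), (map fst p); split => //.
- by rewrite /= !size_map.
- by rewrite size_map; case: (p) hp.
- by rewrite huv hue.
- move=> i e0; rewrite size_map => hi; exact: walk_nth.
Qed.

Lemma path_rev G (x y : V) : is_path_xy ends G x y -> is_path_xy ends G y x.
Proof.
case=> vs [es [hs hes /andP[hu1 hu2] hn [hh hl hV hE]]].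
exists (rev vs), (rev es); split.
- by rewrite !size_rev.
- by rewrite size_rev.
- by rewrite !rev_uniq hu1 hu2.
- move=> i e0; rewrite size_rev => hi.
  rewrite nth_rev // !nth_rev ?hs; try lia.
  have hj : size es - i.+1 < size es by lia.
  have := hn _ e0 hj.
  have -> : (size es - i.+1).+1 = (size es).+1 - i.+1 by lia.
  have -> : (size es).+1 - i.+2 = size es - i.+1 by lia.
  rewrite !(set_nth_default x y) ?hs; try lia.
- case: vs hs hh hl hV {hn hu1} => [|v0 vs] //= _ hh hl hV.
  split.
  + have hr : forall (s : seq V) d, head d (rev s) = last d s.
      by move=> s d; case/lastP: s => [|s w] //; rewrite rev_rcons last_rcons.
    by rewrite hr.
  + by rewrite rev_cons last_rcons hh.
  + by rewrite hV; apply/setP => w; rewrite !inE mem_rev.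
  + by rewrite hE; apply/setP => w; rewrite !inE mem_rev.
Qed.


Lemma wf_union G1 G2 : wf ends G1 -> wf ends G2 -> wf ends (gunion G1 G2).
Proof.
move=> h1 h2 f; rewrite !inE => /orP[] hf.
  by case/andP: (h1 f hf) => -> ->.
by case/andP: (h2 f hf) => -> ->; rewrite !orbT.
Qed.

Lemma sub_union G G1 G2 : subgraph G1 G -> subgraph G2 G -> subgraph (gunion G1 G2) G.
Proof. by case/andP=> a b /andP[c d]; apply/andP; split; rewrite subUset ?a ?b ?c ?d. Qed.

Lemma sub_unionl G1 G2 : subgraph G1 (gunion G1 G2).
Proof. by apply/andP; split; apply: subsetUl. Qed.

Lemma sub_unionr G1 G2 : subgraph G2 (gunion G1 G2).
Proof. by apply/andP; split; apply: subsetUr. Qed.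

Lemma gw_sub G a p : wf ends G -> p != [::] -> walk a p -> {subset map fst p <= gE G} ->
  subgraph (gw a p) G.
Proof.
move=> hG hp hw hs; apply/andP; split; apply/subsetP => x hx.
  case: (gw_cover hp hw hx) => f hf hi; apply: inc_wf hG _ hi.
  by apply: hs; rewrite inE in hf.
by apply: hs; rewrite inE in hx.
Qed.

Lemma attach_good G H u q e' z :
  let p := rcons q (e', z) in let P := gw u p in let H1 := gunion H P in
  wf ends G -> wf ends H -> cacti ends H -> subgraph H G -> u \in gV H ->
  walk u p -> uniq (map fst p) -> all (okE G (gE H)) (map fst p) ->
  uniq (map snd q) && all (fun v => v \notin gV H) (map snd q) ->
  (z \in gV H) || (z \in map snd q) ->
  [/\ wf ends P, subgraph P G, gE P :&: gE H = set0,
      [/\ wf ends H1, subgraph H1 G & cacti ends H1] &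
      (proper_subgraph H H1 /\ (Delta H1 - Delta H = 1)%R)].
Proof.
move=> p P H1 hG hH hcH hsub hu hw hue hok hq hz.
have hE : all (fun f => f \notin gE H) (map fst p).
  by apply/allP => f hf; case/andP: (allP hok f hf).
have hpn : p != [::] by rewrite /p; case: (q).
have hwP : wf ends P by apply: gw_wf.
have hsP : subgraph P G.
  apply: gw_sub => // f hf; by case/andP: (allP hok f hf).
have hdisj : gE P :&: gE H = set0.
  apply/setP => f; rewrite !inE; apply/negbTE/negP => /andP[h1 h2].
  by have := allP hE f h1; rewrite h2.
have hdelta := attach_delta hu hw hue hE hq hz.
split => //.
- split; [exact: wf_union | exact: sub_union | ].
  apply: (cacti_union (sub_unionl H P)) => //.
  + move=> v; rewrite inE => /orP[hv|hv].
      case: hcH => hi hl _; apply: leq_trans (ok_deg2 hv (hl v) (hi v)) _.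
      apply: deg_sub; exact: subsetUl.
    case hvH : (v \in gV H).
      case: hcH => hi hl _; apply: leq_trans (ok_deg2 hvH (hl v) (hi v)) _.
      apply: deg_sub; exact: subsetUl.
    have hvq : v \in map snd q.
      move: hv; rewrite inE /p map_rcons inE mem_rcons inE /=.
      case/orP=> [/eqP hvu|/orP[/eqP hvz|//]]; first by rewrite hvu hu in hvH.
      by move: hz; rewrite -hvz hvH.
    apply: leq_trans (attach_deg hw hue hvq) _; apply: deg_sub; exact: subsetUr.
  + move=> v; rewrite inE => /orP[hv|hv]; first by exists v; rewrite connect0 hv.
    exists u; split; last by rewrite hu.
    rewrite (sym_connect_sym (@adj_sym _)).
    apply: (connect_mono (H := P)); first exact: subsetUr.
    exact: gw_connect.
split; first split.
- exact: sub_unionl.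
- move=> heq.
  have : e' \in gE H1 by rewrite !inE /p map_rcons mem_rcons inE eqxx orbT.
  rewrite -heq => he'.
  by have := allP hE e'; rewrite /p map_rcons mem_rcons inE eqxx he' => /(_ isT).
- rewrite hdelta; lia.
Qed.


Definition TYPE H P :=
  [\/ exists x y, is_path_xy ends P x y /\ gV H :&: gV P = [set x; y],
      exists x, is_lollipop_x ends P x /\ gV H :&: gV P = [set x],
      is_cycle ends P /\ #|gV H :&: gV P| = 1
    | is_bicycle ends P /\ gV H :&: gV P = set0].

Lemma attach_type H u q e' z :
  let p := rcons q (e', z) in
  u \in gV H -> walk u p -> uniq (map fst p) ->
  all (fun f => f \notin gE H) (map fst p) ->
  uniq (map snd q) && all (fun v => v \notin gV H) (map snd q) ->
  (z \in gV H) || (z \in map snd q) -> TYPE H (gw u p).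
Proof.
move=> p hu hw hue hE hq hz; rewrite /TYPE.
have hcap := attach_cap e' z hu hq.
case/andP: hq => hqu /allP hall.
have hlast : last u (map snd p) = z by rewrite /p map_rcons last_rcons.
case hzH : (z \in gV H).
  case: (eqVneq z u) => [hzu|hzu].
    apply: Or43; split.
      apply: closed_cycle => //; first by rewrite /p; case: (q).
        by rewrite hlast hzu.
      rewrite /p map_rcons rcons_uniq hqu andbT; apply/negP => h.
      by have := hall z h; rewrite hzH.
    have -> : gV H :&: gV (gw u p) = [set u].
      by apply/setP => x; rewrite hcap inE hzu hu andbT orbb.
    by rewrite cards1.
  apply: Or41; exists u, z; split.
    rewrite -hlast; apply: walk_path => //; first by rewrite /p; case: (q).
    rewrite /p map_rcons /= rcons_uniq hqu mem_rcons inE negb_or eq_sym hzu /= andbT.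
    apply/andP; split; apply/negP => h.
      by have := hall u h; rewrite hu.
    by have := hall z h; rewrite hzH.
  by apply/setP => x; rewrite hcap !inE hzH andbT.
move: hz; rewrite hzH /= => hzq.
apply: Or42; exists u; split; last first.
  by apply/setP => x; rewrite hcap inE hzH andbF orbF.
case/mapP: hzq => s hs hsz; clear hlast hcap; subst z.
move: hw hue; rewrite /p => hw hue.
case/splitPr: hs hw hue hqu hall => q1 q2 hw hue hqu hall.
move: hw hue; rewrite rcons_cat rcons_cons -cat_rcons walk_cat map_rcons last_rcons.
move=> /andP[hw1 hw2] hue.
move: hqu; rewrite map_cat /= cat_uniq /= => /and3P[hu1 hn12 /andP[hsq2 hu2]].
move: hue; rewrite map_cat cat_uniq => /and3P[huE1 hnE huE2].
exists (gw s.2 (rcons q2 (e', s.2))), (gw u (rcons q1 s)), s.2; split.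
- apply: closed_cycle => //; first by case: (q2).
    by rewrite map_rcons last_rcons.
  by rewrite map_rcons rcons_uniq hsq2 hu2.
- apply: path_rev.
  have -> : s.2 = last u (map snd (rcons q1 s)) by rewrite map_rcons last_rcons.
  apply: walk_path => //; first by case: (q1).
  rewrite map_rcons /= rcons_uniq mem_rcons inE.
  have hq1 : uniq (map snd q1) by move: hu1.
  have hsq1 : s.2 \notin map snd q1.
    by apply/negP => h; apply: (negP hn12); rewrite h.
  rewrite hq1 hsq1 andbT negb_or.
  apply/andP; split=> //; apply/andP; split.
    apply: (contraL _ hu) => /eqP ->; apply: hall.
    by rewrite map_cat mem_cat inE eqxx orbT.
  by apply: (contraL _ hu) => h; apply: hall; rewrite map_cat mem_cat h.
- apply/setP => x; rewrite !inE !map_rcons !mem_rcons !inE.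
  case: (eqVneq x s.2) => [->|hxz] /=; first by rewrite ?eqxx ?orbT.
  apply/negbTE/negP => /andP[hx2 /orP[/eqP hxu|hx1]].
    by have := hall x; rewrite map_cat mem_cat inE hx2 !orbT hxu hu => /(_ isT).
  by apply: (negP hn12); apply/orP; right; apply/hasP; exists x.
- apply/setP => f; rewrite !inE; apply/negbTE/negP => /andP[h2 h1].
  by apply: (negP hnE); apply/hasP; exists f.
- rewrite /gunion /=; congr MGraph; apply/setP => x;
  rewrite !inE ?map_cat !map_rcons ?mem_cat !mem_rcons !inE /=.
    by case: (x == s.2); case: (x == u); case: (x \in map snd q1);
      case: (x \in map snd q2); rewrite ?orbT.
  by case: (x == e'); case: (x == s.1); case: (x \in map fst q1);
    case: (x \in map fst q2); rewrite ?orbT.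
Qed.

End Walks.

Section Bicycle.
Variables (V E : finType) (ends : E -> V * V).

Lemma closed_delta (c : V) (p : seq (E * V)) : p != [::] -> last c (map snd p) = c ->
  uniq (map fst p) -> uniq (map snd p) -> Delta (gw c p) = 0%R.
Proof.
move=> hp hl hue huv.
have hc : c \in map snd p.
  case: p hp hl {hue huv} => [|s p] //= _ hl.
  by have := mem_last s.2 (map snd p); rewrite hl.
rewrite /Delta /= card_set_uniq1 // size_map.
have -> : [set v in c :: map snd p] = [set v in map snd p].
  by apply/setP => v; rewrite !inE; case: eqP => // ->.
by rewrite card_set_uniq1 // size_map GRing.subrr.
Qed.

Lemma first_edge a (p : seq (E * V)) : p != [::] -> walk ends a p ->
  exists2 f, f \in map fst p & inc ends a f.
Proof.
case: p => [|s p] // _ /= /andP[hl _]; exists s.1; first by rewrite inE eqxx.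
by case/andP: (lk_inc hl).
Qed.

Lemma bicycle_build (c : V) (pc : seq (E * V)) (a : V) (q : seq (E * V)) (e' : E) (z : V) :
  let C := gw c pc in let p := rcons q (e', z) in let B := gunion C (gw a p) in
  walk ends c pc -> pc != [::] -> last c (map snd pc) = c ->
  uniq (map fst pc) -> uniq (map snd pc) ->
  a \in gV C -> walk ends a p -> uniq (map fst p) ->
  all (fun f => f \notin gE C) (map fst p) ->
  uniq (map snd q) && all (fun v => v \notin gV C) (map snd q) ->
  (z \in gV C) || (z \in map snd q) ->
  [/\ wf ends B, is_bicycle ends B, (forall v, v \in gV B -> 2 <= deg ends B v),
      3 <= deg ends B a & (forall v, v \in gV B -> connect (adj ends B) v a)].
Proof.
move=> C p B hwc hpc hlc huec huvc ha hw hue hE hq hz.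
have hcyc : is_cycle ends C by apply: closed_cycle.
have hpn : p != [::] by rewrite /p; case: (q).
have hwf : wf ends B by apply: wf_union; apply: gw_wf.
have hdeg : forall v, v \in gV B -> 2 <= deg ends B v.
  move=> v; rewrite inE => /orP[hv|hv].
    by rewrite -(hcyc.2 v hv) deg_sub //; apply: subsetUl.
  case hvC : (v \in gV C).
    by rewrite -(hcyc.2 v hvC) deg_sub //; apply: subsetUl.
  have hvq : v \in map snd q.
    move: hv; rewrite inE /p map_rcons inE mem_rcons inE /=.
    case/orP=> [/eqP hvu|/orP[/eqP hvz|//]]; first by rewrite hvu ha in hvC.
    by move: hz; rewrite -hvz hvC.
  apply: leq_trans (attach_deg hw hue hvq) _; apply: deg_sub; exact: subsetUr.
have hcon : forall v, v \in gV B -> connect (adj ends B) v a.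
  move=> v; rewrite inE => /orP[hv|hv].
    apply: (connect_mono (H := C)); first exact: subsetUl.
    apply: (connect_trans (y := c)); last exact: gw_connect.
    rewrite (sym_connect_sym (@adj_sym _ _ ends _)); exact: gw_connect.
  apply: (connect_mono (H := gw a p)); first exact: subsetUr.
  rewrite (sym_connect_sym (@adj_sym _ _ ends _)); exact: gw_connect.
split => //.
- split.
  + split; first by apply/set0Pn; exists a; rewrite inE ha.
    move=> x y hx hy; apply: (connect_trans (y := a)); first exact: hcon.
    rewrite (sym_connect_sym (@adj_sym _ _ ends _)); exact: hcon.
  + move=> v hl; have hv := hl.1; by case: (deg2_ok (hdeg v hv)).
  + by rewrite /B (attach_delta ha hw hue hE hq hz) (closed_delta hpc hlc huec huvc) GRing.add0r.
- case: (first_edge hpn hw) => f hf hif.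
  rewrite -(hcyc.2 a ha); apply: (deg_sub_strict (f := f)) => //.
  + exact: subsetUl.
  + by rewrite !inE hf orbT.
  + exact: (allP hE f hf).
Qed.

Lemma bicycle_good G H B a :
  let H1 := gunion H B in
  wf ends G -> wf ends H -> cacti ends H -> subgraph H G -> wf ends B -> subgraph B G ->
  gE B :&: gE H = set0 -> gV H :&: gV B = set0 -> a \in gV B ->
  (forall v, v \in gV B -> 2 <= deg ends B v) -> 3 <= deg ends B a ->
  (forall v, v \in gV B -> connect (adj ends B) v a) -> Delta B = 1%R ->
  [/\ wf ends H1, subgraph H1 G & cacti ends H1] /\
  (proper_subgraph H H1 /\ (Delta H1 - Delta H = 1)%R).
Proof.
move=> H1 hG hH hcH hsub hwB hsB hdE hdV ha hdeg h3 hcon hD.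
split; first split; [exact: wf_union | exact: sub_union | | ].
- apply: (cacti_union (sub_unionl H B)) => //.
  + move=> v; rewrite inE => /orP[hv|hv].
      case: hcH => hi hl _; apply: leq_trans (ok_deg2 hv (hl v) (hi v)) _.
      apply: deg_sub; exact: subsetUl.
    apply: leq_trans (hdeg v hv) _; apply: deg_sub; exact: subsetUr.
  + move=> v; rewrite inE => /orP[hv|hv]; first by exists v; rewrite connect0 hv.
    exists a; split.
      apply: (connect_mono (H := B)); first exact: subsetUr.
      exact: hcon.
    apply/orP; right; rewrite !inE ha orbT /=; apply: leq_trans h3 _; apply: deg_sub; exact: subsetUr.
have [f hf hif] : exists2 f, f \in gE B & inc ends a f.
  have : 0 < #|incident ends B a|.
    rewrite card_gt0; apply/negP => /eqP hi.
    by case: (deg2_ok (hdeg a ha)) => _; rewrite /isolated ha hi eqxx.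
  by case/card_gt0P => f; rewrite inE => /andP[hf hi]; exists f.
split; first split.
- exact: sub_unionl.
- move=> heq; have : f \in gE H1 by rewrite !inE hf orbT.
  rewrite -heq => hfH.
  have : f \in gE B :&: gE H by rewrite inE hf hfH.
  by rewrite hdE inE.
have cE : #|gE H1| = #|gE H| + #|gE B|.
  by rewrite /= cardsU setIC hdE cards0 subn0.
have cV : #|gV H1| = #|gV H| + #|gV B|.
  by rewrite /= cardsU hdV cards0 subn0.
move: hD; rewrite /Delta cE cV.
move: #|gE H| #|gE B| #|gV H| #|gV B| => x1 x2 x3 x4.
rewrite !PoszD; lia.
Qed.
End Bicycle.

Section Step.
Variables (V E : finType) (ends : E -> V * V).
Implicit Types (G H : mgraph V E).

Lemma mgraph_eq (A B : mgraph V E) : gV A = gV B -> gE A = gE B -> A = B.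
Proof. by case: A; case: B => /= ? ? ? ? -> ->. Qed.

Lemma comp_eq G (c : V) (C : mgraph V E) :
  wf ends G -> wf ends C -> subgraph C G -> c \in gV C ->
  (forall x, x \in gV C -> connect (adj ends C) c x) ->
  (forall y g, y \in gV C -> g \in gE G -> inc ends y g -> g \in gE C) ->
  component ends G c = C.
Proof.
move=> hG hC /andP[sV sE] hc hconC hclos.
have clos : forall y z, y \in gV C -> adj ends G y z -> z \in gV C.
  move=> y z hy /existsP[g /andP[hg hl]].
  have /andP[iy iz] := lk_inc hl.
  exact: inc_wf hC (hclos y g hy hg iy) iz.
have reach : forall x, connect (adj ends G) c x -> x \in gV C.
  move=> x /connectP[s hp ->]; elim: s c hc hp {hconC} => [|y s IH] c0 hc0 //= /andP[h hp].
  exact: IH (clos _ _ hc0 h) hp.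
apply: mgraph_eq; apply/setP => x; rewrite !inE.
  apply/idP/idP; first by case/andP=> _; apply: reach.
  move=> hx; rewrite (subsetP sV _ hx) /=.
  exact: connect_mono sE (hconC x hx).
apply/idP/idP.
  case/andP=> hx /reach h1; apply: (hclos _ x h1 hx); by rewrite /inc eqxx.
move=> hx; rewrite (subsetP sE _ hx) /=.
apply: connect_mono sE _; apply: hconC.
by case/andP: (hC x hx).
Qed.


Lemma gw_edges_ok G F (a : V) (p : seq (E * V)) f :
  all (okE G F) (map fst p) -> f \in gE (gw a p) -> okE G F f.
Proof. by move=> h; rewrite inE => /(allP h). Qed.

Lemma step G H : wf ends G -> cacti ends G -> wf ends H -> cacti ends H ->
  subgraph H G -> H <> G ->
  exists P, [/\ wf ends P, subgraph P G, gE P :&: gE H = set0, TYPE ends H P &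
     ([/\ wf ends (gunion H P), subgraph (gunion H P) G & cacti ends (gunion H P)] /\
      (proper_subgraph H (gunion H P) /\ (Delta (gunion H P) - Delta H = 1)%R))].
Proof.
move=> hG hcG hH hcH hsub hne.
case: (hcG) => hniG hnlG hcompG.
case/andP: (hsub) => sV sE.
have [e0 he0] : exists e, (e \in gE G) && (e \notin gE H).
  case: (boolP [exists e, (e \in gE G) && (e \notin gE H)]) => [/existsP //|hno].
  exfalso.
  have hEE : gE H = gE G.
    apply/eqP; rewrite eqEsubset sE /=; apply/subsetP => e he.
    apply/negPn/negP => heH; apply: (negP hno); apply/existsP; exists e; by rewrite he heH.
  apply: hne; apply: mgraph_eq => //.
  apply/eqP; rewrite eqEsubset sV /=; apply/subsetP => v hv.
  have := hniG v; rewrite /isolated hv /= => hi.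
  have /set0Pn[e] : incident ends G v != set0 by [].
  rewrite inE => /andP[he hve]; apply: (inc_wf hH _ hve); by rewrite hEE.
case: (boolP [exists e, [&& e \in gE G, e \notin gE H &
                          [exists u, (u \in gV H) && inc ends u e]]]).
  case/existsP => e /and3P[heG heH /existsP[u /andP[hu hue]]].
  have hyp : forall f v, okE G (gE H) f -> inc ends v f -> v \notin gV H ->
      forall f', f' \in gE G -> inc ends v f' -> f' \notin gE H.
    move=> f v _ _ hv f' _ hvf'; apply/negP => hf'H.
    by rewrite (inc_wf hH hf'H hvf') in hv.
  have heok : okE G (gE H) e by rewrite /okE heG heH.
  case: (walk_exists hG hnlG hyp hu heok hue) => q [e' [z [hw hue' hok hq hz]]].
  exists (gw u (rcons q (e', z))).
  have [hwP hsP hd [h1 h2 h3] hpr] := attach_good hG hH hcH hsub hu hw hue' hok hq hz.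
  split => //.
  apply: attach_type => //.
  by apply/allP => f hf; case/andP: (allP hok f hf).
move=> hB.
have caseB : forall f y, f \in gE G -> f \notin gE H -> inc ends y f -> y \notin gV H.
  move=> f y hf hfH hy; apply/negP => hyH; apply: (negP hB); apply/existsP; exists f.
  by rewrite hf hfH; apply/existsP; exists y; rewrite hyH hy.
case/andP: he0 => he0G he0H.
set w := (ends e0).1.
have hwe : inc ends w e0 by rewrite /inc eqxx.
have hyp1 : forall f v, okE G (gE H) f -> inc ends v f -> v \notin [set w] ->
    forall f', f' \in gE G -> inc ends v f' -> f' \notin gE H.
  move=> f v /andP[hf hfH] hv _ f' hf' hv'; apply/negP => hf'H.
  by have := caseB f v hf hfH hv; rewrite (inc_wf hH hf'H hv').
have he0ok : okE G (gE H) e0 by rewrite /okE he0G he0H.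
case: (walk_exists hG hnlG hyp1 (set11 w) he0ok hwe) => q [e' [z [hw hue hok hq hz]]].
have [c [pc [hwc hpc hlc /andP[huec huvc] hokc]]] :
  exists c pc, [/\ walk ends c pc, pc != [::], last c (map snd pc) = c,
                 uniq (map fst pc) && uniq (map snd pc) & all (okE G (gE H)) (map fst pc)].
  case/andP: hq => hqu /allP hall.
  case/orP: hz => [hzw|hzq].
    rewrite inE in hzw; move/eqP: hzw => hzw; subst z.
    exists w, (rcons q (e', w)); split => //.
    - by case: (q).
    - by rewrite map_rcons last_rcons.
    - rewrite hue map_rcons rcons_uniq hqu andbT /=; apply/negP => h.
      by have := hall w h; rewrite inE eqxx.
  case/mapP: hzq => s hs hsz; subst z.
  move: hw hue hok; case/splitPr: hs hqu hall => q1 q2 hqu hall.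
  rewrite rcons_cat rcons_cons -cat_rcons walk_cat map_rcons last_rcons.
  move=> /andP[_ hw2]; rewrite map_cat cat_uniq all_cat => /and3P[_ _ hue2] /andP[_ hok2].
  exists s.2, (rcons q2 (e', s.2)); split => //.
  - by case: (q2).
  - by rewrite map_rcons last_rcons.
  - rewrite hue2 map_rcons rcons_uniq /=.
    move: hqu; rewrite map_cat cat_uniq /= => /and3P[_ _ /andP[-> ->]].
    by [].
set C := gw c pc.
have hwC : wf ends C by apply: gw_wf.
have hsC : subgraph C G.
  apply: (gw_sub hG hpc hwc) => f hf; by case/andP: (allP hokc f hf).
have hCV : forall y, y \in gV C -> y \notin gV H.
  move=> y hy; case: (gw_cover hpc hwc hy) => f hf hyf.
  case/andP: (gw_edges_ok hokc hf) => hfG hfH; exact: caseB hfG hfH hyf.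
have hcC : c \in gV C by rewrite inE inE eqxx.
have [f [a [hf ha hfa]]] : exists f a, [/\ okE G (gE H :|: gE C) f, a \in gV C & inc ends a f].
  case: (boolP [exists f, [exists a, [&& okE G (gE H :|: gE C) f, a \in gV C & inc ends a f]]]).
    by case/existsP => f /existsP[a /and3P[h1 h2 h3]]; exists f, a.
  move=> hno; exfalso.
  have hcGc : c \in gV G by case/andP: hsC => /subsetP -> .
  apply: (hcompG c hcGc).
  rewrite (comp_eq hG hwC hsC hcC).
  - exact: closed_cycle.
  - exact: gw_connect.
  move=> y g hy hg hyg; apply/negPn/negP => hgC; apply: (negP hno).
  apply/existsP; exists g; apply/existsP; exists y.
  rewrite hy hyg andbT /okE hg inE negb_or (negbTE hgC) /= ?andbT.
  apply/negP => hgH; by have := hCV y hy; rewrite (inc_wf hH hgH hyg).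
have hyp2 : forall g v, okE G (gE H :|: gE C) g -> inc ends v g -> v \notin gV C ->
    forall f', f' \in gE G -> inc ends v f' -> f' \notin gE H :|: gE C.
  move=> g v /andP[hg]; rewrite inE negb_or => /andP[hgH _] hv hvC f' hf' hvf'.
  rewrite inE negb_or; apply/andP; split.
    apply/negP => hf'H; by have := caseB g v hg hgH hv; rewrite (inc_wf hH hf'H hvf').
  apply/negP => hf'C; by rewrite (inc_wf hwC hf'C hvf') in hvC.
case: (walk_exists hG hnlG hyp2 ha hf hfa) => q' [e3 [z' [hw' hue' hok' hq' hz']]].
have hE' : all (fun f => f \notin gE C) (map fst (rcons q' (e3, z'))).
  apply/allP => g hg; case/andP: (allP hok' g hg) => _; by rewrite inE negb_or => /andP[].
have [hwB hbic hdegB h3 hconB] := bicycle_build hwc hpc hlc huec huvc ha hw' hue' hE' hq' hz'.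
set B := gunion C (gw a (rcons q' (e3, z'))) in hwB hbic hdegB h3 hconB *.
have hpn' : rcons q' (e3, z') != [::] by case: (q').
have hsB : subgraph B G.
  apply: sub_union => //; apply: (gw_sub hG hpn' hw') => g hg; by case/andP: (allP hok' g hg).
have hBE : forall g, g \in gE B -> (g \in gE G) && (g \notin gE H).
  move=> g; rewrite inE => /orP[hg|hg].
    exact: gw_edges_ok hokc hg.
  case/andP: (gw_edges_ok hok' hg) => ->; by rewrite inE negb_or => /andP[].
have hdE : gE B :&: gE H = set0.
  apply/setP => g; rewrite in_set0 in_setI; apply/negbTE/negP => /andP[hg hgH].
  by case/andP: (hBE g hg); rewrite hgH.
have hdV : gV H :&: gV B = set0.
  apply/setP => x; rewrite inE [in RHS]inE; apply/negbTE/negP => /andP[hxH hxB].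
  have [g hg hxg] : exists2 g, g \in gE B & inc ends x g.
    move: hxB; rewrite inE => /orP[hx|hx].
      by case: (gw_cover hpc hwc hx) => g hg hxg; exists g; rewrite // inE hg.
    by case: (gw_cover hpn' hw' hx) => g hg hxg; exists g; rewrite // inE hg orbT.
  case/andP: (hBE g hg) => hgG hgH.
  by have := caseB g x hgG hgH hxg; rewrite hxH.
have haB : a \in gV B by rewrite inE ha.
have hDB : Delta B = 1%R by case: hbic.
have [hres1 hres2] := bicycle_good hG hH hcH hsub hwB hsB hdE hdV haB hdegB h3 hconB hDB.
exists B; split => //.
by apply: Or44.
Qed.

End Step.

Section Final.
Variables (V E : finType) (ends : E -> V * V).

Definition Dec (G G0 : mgraph V E) (r : nat) (P Gs : nat -> mgraph V E) :=
    [/\ Gs 0 = G0, Gs r = G,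
        forall i, i <= r -> [/\ wf ends (Gs i), subgraph (Gs i) G & cacti ends (Gs i)],
        forall i, 1 <= i <= r ->
          [/\ wf ends (P i), subgraph (P i) G,
              Gs i = gunion (Gs i.-1) (P i),
              gE (P i) :&: gE (Gs i.-1) = set0 &
              [\/ exists x y, is_path_xy ends (P i) x y /\
                                gV (Gs i.-1) :&: gV (P i) = [set x; y],
                  exists x, is_lollipop_x ends (P i) x /\
                                gV (Gs i.-1) :&: gV (P i) = [set x],
                  is_cycle ends (P i) /\ #|gV (Gs i.-1) :&: gV (P i)| = 1
                | is_bicycle ends (P i) /\ gV (Gs i.-1) :&: gV (P i) = set0]] &
        forall i, 1 <= i <= r ->
          proper_subgraph (Gs i.-1) (Gs i) /\
          (Delta (Gs i) - Delta (Gs i.-1) = 1)%R].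

Lemma dec_refl (G : mgraph V E) : wf ends G -> cacti ends G ->
  Dec G G 0 (fun _ => G) (fun _ => G).
Proof.
move=> hG hcG; split => // i.
- move=> _; split => //; by apply/andP; split.
- by case: i.
- by case: i.
Qed.

Lemma graph_dec (H G : mgraph V E) : H = G \/ H <> G.
Proof.
case: (boolP ((gV H == gV G) && (gE H == gE G))) => [/andP[/eqP a /eqP b]|h].
  by left; apply: mgraph_eq.
by right => heq; rewrite heq !eqxx in h.
Qed.

Lemma seq_exists (G : mgraph V E) : wf ends G -> cacti ends G ->
  forall n H, #|gE G| - #|gE H| <= n -> wf ends H -> cacti ends H -> subgraph H G ->
  exists r P Gs, Dec G H r P Gs.
Proof.
move=> hG hcG n; elim: n => [|n IH] H hn hH hcH hsub.
  case: (graph_dec H G) => [->|hne]; first by exists 0, (fun _ => G), (fun _ => G); apply: dec_refl.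
  have [P1 [_ hsP1 hd1 _ [[hw1 hs1 hc1] [hpr1 hD1]]]] := step hG hcG hH hcH hsub hne.
  exfalso.
  have hlt : #|gE H| < #|gE (gunion H P1)|.
    move: hD1; rewrite /Delta.
    have hVle : #|gV H| <= #|gV (gunion H P1)| by apply: subset_leq_card; apply: subsetUl.
    move: (#|gE H|) (#|gE (gunion H P1)|) (#|gV H|) (#|gV (gunion H P1)|) hVle.
    move=> a b c d hcd; lia.
  have : #|gE (gunion H P1)| <= #|gE G|.
    by apply: subset_leq_card; case/andP: hs1.
  move: hn hlt; lia.
case: (graph_dec H G) => [->|hne]; first by exists 0, (fun _ => G), (fun _ => G); apply: dec_refl.
have [P1 [hwP1 hsP1 hd1 hT1 [[hw1 hs1 hc1] [hpr1 hD1]]]] := step hG hcG hH hcH hsub hne.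
have hlt : #|gE H| < #|gE (gunion H P1)|.
  move: hD1; rewrite /Delta.
  have hVle : #|gV H| <= #|gV (gunion H P1)| by apply: subset_leq_card; apply: subsetUl.
  move: (#|gE H|) (#|gE (gunion H P1)|) (#|gV H|) (#|gV (gunion H P1)|) hVle.
  move=> a b c d hcd; lia.
have hn' : #|gE G| - #|gE (gunion H P1)| <= n.
  have : #|gE (gunion H P1)| <= #|gE G|.
    by apply: subset_leq_card; case/andP: hs1.
  move: hn hlt; lia.
have [r [P [Gs hDec]]] := IH _ hn' hw1 hc1 hs1.
case: hDec => h0 hr hall hstep hprop.
exists r.+1, (fun i => if i == 1 then P1 else P i.-1),
  (fun i => if i == 0 then H else Gs i.-1); split.
- by [].
- by rewrite /= hr.
- case => [|i] hi /=; first by split.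
  exact: hall.
- case => [|[|i]] //= hi.
  exact: (hstep i.+1).
- case => [|[|i]] //= hi.
    by rewrite h0.
  exact: (hprop i.+1).
Qed.

Lemma main_thm (G G0 : mgraph V E) :
  wf ends G -> wf ends G0 -> cacti ends G -> cacti ends G0 -> subgraph G0 G ->
  G = G0 \/ exists r P Gs, Dec G G0 r P Gs.
Proof.
move=> hG hG0 hcG hcG0 hsub; right.
exact: (seq_exists hG hcG (leqnn _) hG0 hcG0 hsub).
Qed.

End Final.

Unset Implicit Arguments.
Set Strict Implicit.

Theorem mainTheorem4 (V E : finType) (ends : E -> V * V) (G G0 : mgraph V E) :
  wf ends G -> wf ends G0 -> cacti ends G -> cacti ends G0 -> subgraph G0 G ->
  G = G0 \/
  exists (r : nat) (P Gs : nat -> mgraph V E),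
    [/\ Gs 0 = G0, Gs r = G,
        forall i, i <= r -> [/\ wf ends (Gs i), subgraph (Gs i) G & cacti ends (Gs i)],
        forall i, 1 <= i <= r ->
          [/\ wf ends (P i), subgraph (P i) G,
              Gs i = gunion (Gs i.-1) (P i),
              gE (P i) :&: gE (Gs i.-1) = set0 &
              [\/ exists x y, is_path_xy ends (P i) x y /\
                                gV (Gs i.-1) :&: gV (P i) = [set x; y],
                  exists x, is_lollipop_x ends (P i) x /\
                                gV (Gs i.-1) :&: gV (P i) = [set x],
                  is_cycle ends (P i) /\ #|gV (Gs i.-1) :&: gV (P i)| = 1
                | is_bicycle ends (P i) /\ gV (Gs i.-1) :&: gV (P i) = set0]] &
        forall i, 1 <= i <= r ->
          proper_subgraph (Gs i.-1) (Gs i) /\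
          (Delta (Gs i) - Delta (Gs i.-1) = 1)%R].
Proof.
move=> hG hG0 hcG hcG0 hsub.
exact: (main_thm hG hG0 hcG hcG0 hsub).
Qed.
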